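(* For each integer $p>2$, there exists a connected $(7p-3)$-regular integral graph with $12p$ vertices.
   Context: A graph is integral if all eigenvalues of its adjacency matrix are integers. *)

(* Defs.v *)
From mathcomp Require Import all_boot all_order all_algebra all_field.
Set Implicit Arguments. Unset Strict Implicit. Unset Printing Implicit Defensive.
Import Order.TTheory GRing.Theory Num.Theory.
Local Open Scope ring_scope.

Definition simple_graph (n : nat) (e : rel 'I_n) : Prop :=
  symmetric e /\ irreflexive e.

Definition regular (n : nat) (e : rel 'I_n) (k : nat) : Prop :=
  forall x : 'I_n, #|[set y | e x y]| = k.

Definition connected_graph (n : nat) (e : rel 'I_n) : Prop :=
  forall x y : 'I_n, connect e x y.

Definition adjmx (n : nat) (e : rel 'I_n) : 'M[algC]_n :=
  \matrix_(i, j) (e i j)%:R.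

Definition integral_graph (n : nat) (e : rel 'I_n) : Prop :=
  forall a : algC, eigenvalue (adjmx e) a -> a \is a Num.int.

(* Main.v *)
Require Import Defs.
From mathcomp Require Import all_boot all_order all_algebra all_field.
From mathcomp Require Import mxtens ring zify.
Set Implicit Arguments. Unset Strict Implicit. Unset Printing Implicit Defensive.
Import Order.TTheory GRing.Theory Num.Theory.

Definition r1n (i k : nat) : bool := i %/ 6 == k %/ 6.
Definition r2n (i k : nat) : bool := i %/ 2 == k %/ 2.
Definition ccn (i k : nat) : bool := r1n i k && ~~ r2n i k.
Definition bbn (i k : nat) : bool := (i != k) && ~~ ccn i k.
Definition cjn (i k : nat) : nat :=
  if i %/ 6 == k %/ 6 then (if i < 6 then 6 else 0) else (if odd k then k.-1 else k.+1).

Definition sum12 (F : nat -> nat) := sumn [seq F j | j <- iota 0 12].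
Definition all12 (P : nat -> bool) := all P (iota 0 12).
Definition all122 (P : nat -> nat -> bool) := all12 (fun i => all12 (P i)).

Lemma all122P P : all122 P -> forall i k, i < 12 -> k < 12 -> P i k.
Proof.
move=> /allP H i k hi hk.
have := H i; rewrite mem_iota /= => /(_ hi); rewrite /all12 => /allP H2.
by apply: H2; rewrite mem_iota.
Qed.

Lemma all12P P : all12 P -> forall i, i < 12 -> P i.
Proof. by move=> /allP H i hi; apply: H; rewrite mem_iota. Qed.

Lemma sum12E (F : nat -> nat) : \sum_(j < 12) F j = sum12 F.
Proof. by rewrite /sum12 -(big_mkord xpredT F) /index_iota subn0 sumnE big_map. Qed.

Lemma chk_sym : all122 (fun i k => (ccn i k == ccn k i) && (bbn i k == bbn k i)).
Proof. by vm_compute. Qed.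
Lemma chk_irr : all12 (fun i => ~~ ccn i i).
Proof. by vm_compute. Qed.
Lemma chk_conn : all122 (fun i k => (cjn i k < 12) && bbn i (cjn i k) && bbn (cjn i k) k).
Proof. by vm_compute. Qed.
Lemma chk_deg : all12 (fun i => (sum12 (fun k => ccn i k) == 4) && (sum12 (fun k => bbn i k) == 7)).
Proof. by vm_compute. Qed.
Lemma chk_r21 : all122 (fun i k => (r2n i k ==> r1n i k) && ((i == k) ==> r2n i k)).
Proof. by vm_compute. Qed.
Definition jjn (i k : nat) : bool := true.
Definition chkmul (f g : nat -> nat -> bool) (h : nat -> nat -> nat) :=
  all122 (fun i k => sum12 (fun j => f i j * g j k) == h i k).
Lemma chk11 : chkmul r1n r1n (fun i k => 6 * r1n i k). Proof. by vm_compute. Qed.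
Lemma chk22 : chkmul r2n r2n (fun i k => 2 * r2n i k). Proof. by vm_compute. Qed.
Lemma chkJJ : chkmul jjn jjn (fun i k => 12 * jjn i k). Proof. by vm_compute. Qed.
Lemma chk12 : chkmul r1n r2n (fun i k => sum12 (fun j => r2n i j * r1n j k)). Proof. by vm_compute. Qed.
Lemma chkJ1 : chkmul jjn r1n (fun i k => sum12 (fun j => r1n i j * jjn j k)). Proof. by vm_compute. Qed.
Lemma chkJ2 : chkmul jjn r2n (fun i k => sum12 (fun j => r2n i j * jjn j k)). Proof. by vm_compute. Qed.
Local Open Scope ring_scope.

Definition Mn (F : nat -> nat -> nat) : 'M[algC]_12 := \matrix_(i, k) (F i k)%:R.

Lemma mulMn f g : Mn f *m Mn g = Mn (fun i k => sum12 (fun j => (f i j * g j k)%N)).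
Proof.
apply/matrixP=> i k; rewrite !mxE -sum12E natr_sum.
by apply: eq_bigr => j _; rewrite !mxE natrM.
Qed.

Lemma eqMn F G : (forall i k, (i < 12)%N -> (k < 12)%N -> F i k = G i k) -> Mn F = Mn G.
Proof. by move=> H; apply/matrixP=> i k; rewrite !mxE H. Qed.

Lemma scaleMn c F : Mn (fun i k => (c * F i k)%N) = c%:R *: Mn F.
Proof. by apply/matrixP=> i k; rewrite !mxE natrM. Qed.

Definition R1 := Mn (fun i k => r1n i k).
Definition R2 := Mn (fun i k => r2n i k).
Definition J12 := Mn (fun i k => jjn i k).

Lemma R1R1 : R1 *m R1 = 6%:R *: R1.
Proof.
rewrite /R1 mulMn -scaleMn; apply: eqMn => i k hi hk; apply/eqP.
exact: (all122P chk11 hi hk).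
Qed.
Lemma R2R2 : R2 *m R2 = 2%:R *: R2.
Proof.
rewrite /R2 mulMn -scaleMn; apply: eqMn => i k hi hk; apply/eqP.
exact: (all122P chk22 hi hk).
Qed.
Lemma JJ : J12 *m J12 = 12%:R *: J12.
Proof.
rewrite /J12 mulMn -scaleMn; apply: eqMn => i k hi hk; apply/eqP.
exact: (all122P chkJJ hi hk).
Qed.
Lemma R1R2 : R1 *m R2 = R2 *m R1.
Proof.
rewrite /R1 /R2 !mulMn; apply: eqMn => i k hi hk; apply/eqP.
exact: (all122P chk12 hi hk).
Qed.
Lemma JR1 : J12 *m R1 = R1 *m J12.
Proof.
rewrite /R1 /J12 !mulMn; apply: eqMn => i k hi hk; apply/eqP.
exact: (all122P chkJ1 hi hk).
Qed.
Lemma JR2 : J12 *m R2 = R2 *m J12.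
Proof.
rewrite /R2 /J12 !mulMn; apply: eqMn => i k hi hk; apply/eqP.
exact: (all122P chkJ2 hi hk).
Qed.

Lemma tensDl m n (X Y : 'M[algC]_m) (Z : 'M[algC]_n) : (X + Y) *t Z = X *t Z + Y *t Z.
Proof. by apply/matrixP=> i j; rewrite !mxE mulrDl. Qed.
Lemma tensNl m n (X : 'M[algC]_m) (Z : 'M[algC]_n) : (- X) *t Z = - (X *t Z).
Proof. by apply/matrixP=> i j; rewrite !mxE mulNr. Qed.
Lemma tensZl m n c (X : 'M[algC]_m) (Z : 'M[algC]_n) : (c *: X) *t Z = c *: (X *t Z).
Proof. by apply/matrixP=> i j; rewrite !mxE mulrA. Qed.
Lemma tensZr m n c (X : 'M[algC]_m) (Z : 'M[algC]_n) : X *t (c *: Z) = c *: (X *t Z).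
Proof. by apply/matrixP=> i j; rewrite !mxE mulrCA. Qed.
Lemma tens11 m n : (1%:M : 'M[algC]_m) *t (1%:M : 'M[algC]_n) = 1%:M.
Proof.
apply/matrixP=> i j.
case: (mxtens_indexP i)=> i0 i1; case: (mxtens_indexP j)=> j0 j1.
rewrite tensmxE !mxE -natrM mulnb; congr (_ %:R); congr nat_of_bool.
apply/andP/eqP => [[/eqP-> /eqP->] //|].
by move/(can_inj (@mxtens_indexK m n)) => [-> ->].
Qed.

Definition Jp p : 'M[algC]_p := const_mx 1.
Lemma JpJp p : Jp p *m Jp p = p%:R *: Jp p.
Proof.
apply/matrixP=> i j; rewrite !mxE (eq_bigr (fun _ => 1)); last by move=> k _; rewrite !mxE mulr1.
by rewrite sumr_const card_ord mulr1.
Qed.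
Local Open Scope ring_scope.

Lemma step n (P : 'M[algC]_n) s (v : 'rV_n) : v != 0 -> P *m P = s *: P ->
  exists w : 'rV_n, [/\ w != 0, exists2 e, (e == 0) || (e == s) & w *m P = e *: w &
   forall Q c, Q *m P = P *m Q -> v *m Q = c *: v -> w *m Q = c *: w].
Proof.
move=> v0 PP; case: (eqVneq (v *m P) 0) => vP.
  exists v; split => //; first by exists 0; rewrite ?eqxx // scale0r.
exists (v *m P); split => //.
  by exists s; rewrite ?eqxx ?orbT // -mulmxA PP scalemxAr.
by move=> Q c QP vQ; rewrite -mulmxA -QP mulmxA vQ scalemxAl.
Qed.

Lemma eig4 n (A P1 P2 P3 P4 : 'M[algC]_n) s1 s2 s3 s4 a (v : 'rV_n) :
  v != 0 -> v *m A = a *: v ->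
  P1 *m P1 = s1 *: P1 -> P2 *m P2 = s2 *: P2 -> P3 *m P3 = s3 *: P3 -> P4 *m P4 = s4 *: P4 ->
  A *m P1 = P1 *m A -> A *m P2 = P2 *m A -> A *m P3 = P3 *m A -> A *m P4 = P4 *m A ->
  P1 *m P2 = P2 *m P1 -> P1 *m P3 = P3 *m P1 -> P1 *m P4 = P4 *m P1 ->
  P2 *m P3 = P3 *m P2 -> P2 *m P4 = P4 *m P2 -> P3 *m P4 = P4 *m P3 ->
  exists w : 'rV_n, exists e1 e2 e3 e4,
   [/\ w != 0, w *m A = a *: w,
       [/\ (e1 == 0) || (e1 == s1), (e2 == 0) || (e2 == s2), (e3 == 0) || (e3 == s3)
         & (e4 == 0) || (e4 == s4)]
     & [/\ w *m P1 = e1 *: w, w *m P2 = e2 *: w, w *m P3 = e3 *: w & w *m P4 = e4 *: w]].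
Proof.
move=> v0 vA S1 S2 S3 S4 A1 A2 A3 A4 C12 C13 C14 C23 C24 C34.
have [w1 [w10 [e1 he1 w1P1] k1]] := step v0 S1.
have w1A := k1 _ _ A1 vA.
have [w2 [w20 [e2 he2 w2P2] k2]] := step w10 S2.
have w2A := k2 _ _ A2 w1A.
have w2P1 := k2 _ _ C12 w1P1.
have [w3 [w30 [e3 he3 w3P3] k3]] := step w20 S3.
have w3A := k3 _ _ A3 w2A.
have w3P1 := k3 _ _ C13 w2P1.
have w3P2 := k3 _ _ C23 w2P2.
have [w4 [w40 [e4 he4 w4P4] k4]] := step w30 S4.
exists w4, e1, e2, e3, e4; split => //.
- exact: k4 _ _ A4 w3A.
- split; [exact: k4 _ _ C14 w3P1 | exact: k4 _ _ C24 w3P2 |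
         exact: k4 _ _ C34 w3P3 | done].
Qed.

Lemma wM n (w : 'rV[algC]_n) M N c d : w *m M = c *: w -> w *m N = d *: w ->
  w *m (M *m N) = (c * d) *: w.
Proof. by move=> h1 h2; rewrite mulmxA h1 -scalemxAl h2 scalerA. Qed.
Lemma wD n (w : 'rV[algC]_n) M N c d : w *m M = c *: w -> w *m N = d *: w ->
  w *m (M + N) = (c + d) *: w.
Proof. by move=> h1 h2; rewrite mulmxDr h1 h2 scalerDl. Qed.
Lemma wN n (w : 'rV[algC]_n) M c : w *m M = c *: w -> w *m (- M) = (- c) *: w.
Proof. by move=> h1; rewrite mulmxN h1 scaleNr. Qed.
Lemma wZ n (w : 'rV[algC]_n) M c k : w *m M = c *: w -> w *m (k *: M) = (k * c) *: w.
Proof. by move=> h1; rewrite -scalemxAr h1 scalerA. Qed.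
Lemma w1 n (w : 'rV[algC]_n) : w *m 1%:M = 1 *: w.
Proof. by rewrite mulmx1 scale1r. Qed.
Local Open Scope ring_scope.

Definition I12 : 'M[algC]_12 := 1%:M.
Definition Xm := J12 - I12 - R1 + R2.
Definition Ym := 2%:R *: R1 - 2%:R *: R2 + I12 - J12.
Definition Amat p : 'M[algC]_(12 * p) := Xm *t Jp p + Ym *t 1%:M.
Definition Q1 p : 'M[algC]_(12 * p) := I12 *t Jp p.
Definition Q2 p : 'M[algC]_(12 * p) := J12 *t 1%:M.
Definition Q3 p : 'M[algC]_(12 * p) := R1 *t 1%:M.
Definition Q4 p : 'M[algC]_(12 * p) := R2 *t 1%:M.

Lemma comm_comb (M : 'M[algC]_12) : M *m J12 = J12 *m M -> M *m R1 = R1 *m M ->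
  M *m R2 = R2 *m M -> M *m Xm = Xm *m M /\ M *m Ym = Ym *m M.
Proof.
move=> h1 h2 h3; rewrite /Xm /Ym /I12.
rewrite !(mulmxDl, mulmxDr, mulmxN, mulNmx, mulmx1, mul1mx, =^~scalemxAr, =^~scalemxAl).
by rewrite h1 h2 h3.
Qed.

Lemma TX p : Xm *t (1%:M : 'M_p) = Q2 p - 1%:M - Q3 p + Q4 p.
Proof. by rewrite /Xm /I12 !(tensDl, tensNl) tens11. Qed.
Lemma TY p : Ym *t (1%:M : 'M_p) = 2%:R *: Q3 p - 2%:R *: Q4 p + 1%:M - Q2 p.
Proof. by rewrite /Ym /I12 !(tensDl, tensNl, tensZl) tens11. Qed.

Lemma Aexpr p : Amat p = (Q2 p - 1%:M - Q3 p + Q4 p) *m Q1 p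
   + (2%:R *: Q3 p - 2%:R *: Q4 p + 1%:M - Q2 p).
Proof. by rewrite -TX -TY /Amat /Q1 /I12 -tensmx_decr. Qed.

Lemma Q1sq p : Q1 p *m Q1 p = p%:R *: Q1 p.
Proof. by rewrite /Q1 tensmx_mul mulmx1 JpJp tensZr. Qed.
Lemma Q2sq p : Q2 p *m Q2 p = 12%:R *: Q2 p.
Proof. by rewrite /Q2 tensmx_mul mulmx1 JJ tensZl. Qed.
Lemma Q3sq p : Q3 p *m Q3 p = 6%:R *: Q3 p.
Proof. by rewrite /Q3 tensmx_mul mulmx1 R1R1 tensZl. Qed.
Lemma Q4sq p : Q4 p *m Q4 p = 2%:R *: Q4 p.
Proof. by rewrite /Q4 tensmx_mul mulmx1 R2R2 tensZl. Qed.

Lemma comm_t1 p (X Y : 'M[algC]_12) : X *m Y = Y *m X ->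
  (X *t (1%:M : 'M_p)) *m (Y *t 1%:M) = (Y *t 1%:M) *m (X *t 1%:M).
Proof. by move=> h; rewrite !tensmx_mul h. Qed.
Lemma comm_tJ p (X : 'M[algC]_12) :
  (X *t (1%:M : 'M_p)) *m Q1 p = Q1 p *m (X *t 1%:M).
Proof. by rewrite /Q1 !tensmx_mul mulmx1 mul1mx mulmx1 mul1mx. Qed.

Lemma A_comm_t p (M : 'M[algC]_12) : M *m J12 = J12 *m M -> M *m R1 = R1 *m M ->
  M *m R2 = R2 *m M -> Amat p *m (M *t 1%:M) = (M *t 1%:M) *m Amat p.
Proof.
move=> h1 h2 h3; have [hx hy] := comm_comb h1 h2 h3.
by rewrite /Amat mulmxDl mulmxDr !tensmx_mul hx hy !mulmx1 !mul1mx.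
Qed.
Lemma A_comm1 p : Amat p *m Q1 p = Q1 p *m Amat p.
Proof.
by rewrite /Amat /Q1 mulmxDl mulmxDr !tensmx_mul !mulmx1 !mul1mx.
Qed.

Lemma cJ1 : J12 *m R1 = R1 *m J12. Proof. exact: JR1. Qed.

Lemma integral_A p a : eigenvalue (Amat p) a -> a \is a Num.int.
Proof.
move=> /eigenvalueP [v vA v0].
have [w [e1 [e2 [e3 [e4 [w0 wA [h1 h2 h3 h4] [wP1 wP2 wP3 wP4]]]]]]] :=
  @eig4 _ (Amat p) (Q1 p) (Q2 p) (Q3 p) (Q4 p) _ _ _ _ a v v0 vA
  (Q1sq p) (Q2sq p) (Q3sq p) (Q4sq p) (A_comm1 p)
  (A_comm_t p (erefl _) JR1 JR2) (A_comm_t p (esym JR1) (erefl _) R1R2)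
  (A_comm_t p (esym JR2) (esym R1R2) (erefl _))
  (esym (comm_tJ p J12)) (esym (comm_tJ p R1)) (esym (comm_tJ p R2))
  (comm_t1 p JR1) (comm_t1 p JR2) (comm_t1 p R1R2).
move: wA; rewrite Aexpr.
have := wD (wM (wD (wD (wD wP2 (wN (w1 w))) (wN wP3)) wP4) wP1)
   (wD (wD (wD (wZ 2%:R wP3) (wN (wZ 2%:R wP4))) (w1 w)) (wN wP2)).
move=> -> /eqP; rewrite -subr_eq0 -scalerBl scaler_eq0 (negbTE w0) orbF subr_eq0 => /eqP <-.
have hint (e : algC) (s : nat) : (e == 0) || (e == s%:R) -> e \is a Num.int.
  by case/orP => /eqP ->; rewrite ?rpred0 ?rpred_nat.
have i1 := hint _ _ h1; have i2 := hint _ _ h2; have i3 := hint _ _ h3; have i4 := hint _ _ h4.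
by rewrite !(rpredD, rpredM, rpredN, rpred1, rpred_nat).
Qed.
Local Open Scope ring_scope.

Definition eg p (u v : 'I_(12 * p)) : bool :=
  let iu := @mxtens_unindex 12 p u in let iv := @mxtens_unindex 12 p v in
  if iu.2 == iv.2 then ccn iu.1 iv.1 else bbn iu.1 iv.1.

Lemma egE p i a k b : eg (@mxtens_index 12 p (i, a)) (mxtens_index (k, b)) =
  if a == b then ccn i k else bbn i k.
Proof. by rewrite /eg !mxtens_indexK. Qed.

Lemma adjA p : adjmx (@eg p) = Amat p.
Proof.
apply/matrixP=> u v.
case: (mxtens_indexP u) => i a; case: (mxtens_indexP v) => k b.
rewrite /adjmx mxE egE /Amat !mxE !mxtens_indexK /=.
have := all122P chk_r21 (ltn_ord i) (ltn_ord k).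
rewrite /ccn /bbn /jjn.
case: (eqVneq i k) => [->|ne].
  rewrite /r1n /r2n !eqxx /= => _.
  case: (a == b) => /=; ring.
have ne' : (val i != val k) by [].
rewrite (negbTE ne') /ccn /=.
case: (r1n i k); case: (r2n i k) => //= _; case: (a == b) => /=; ring.
Qed.

Lemma simple_eg p : simple_graph (@eg p).
Proof.
split.
  move=> u v; case: (mxtens_indexP u) => i a; case: (mxtens_indexP v) => k b.
  rewrite !egE eq_sym.
  by have /andP [/eqP -> /eqP ->] := all122P chk_sym (ltn_ord i) (ltn_ord k).
move=> u; case: (mxtens_indexP u) => i a.
by rewrite egE eqxx; apply/negbTE; exact: (all12P chk_irr (ltn_ord i)).
Qed.

Lemma regular_eg p : (0 < p)%N -> regular (@eg p) (7 * p - 3).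
Proof.
move=> p0 u; case: (mxtens_indexP u) => i a.
rewrite -sum1_card big_mkcond /=.
rewrite (reindex (@mxtens_index 12 p)) /=; last first.
  by exists (@mxtens_unindex 12 p) => ? _; rewrite (mxtens_indexK, mxtens_unindexK).
transitivity (\sum_(kb : 'I_12 * 'I_p) (nat_of_bool (if a == kb.2 then ccn i kb.1 else bbn i kb.1))).
  apply: eq_bigr => [[k b]] _; rewrite inE egE /=.
  by case: (if a == b then _ else _).
rewrite -(pair_bigA _ (fun (k : 'I_12) (b : 'I_p) => nat_of_bool (if a == b then ccn i k else bbn i k))) /=.
transitivity (\sum_(k < 12) (ccn i k + (p - 1) * bbn i k)%N).
  apply: eq_bigr => k _.
  rewrite (bigD1 a) //= eqxx; congr (_ + _)%N.
  rewrite (eq_bigr (fun _ => nat_of_bool (bbn i k))); last first.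
    by move=> b; rewrite eq_sym => /negbTE ->.
  rewrite sum_nat_const; congr (_ * _)%N.
  by rewrite cardC1 card_ord subn1.
rewrite big_split /= -big_distrr /= !(sum12E (fun k => ccn i k)) !(sum12E (fun k => bbn i k)).
have /andP [/eqP -> /eqP ->] := all12P chk_deg (ltn_ord i).
lia.
Qed.

Lemma connected_eg p : (2 < p)%N -> connected_graph (@eg p).
Proof.
move=> p2 u t; case: (mxtens_indexP u) => i a; case: (mxtens_indexP t) => k b.
pose dn := (if (0 != a) && (0 != b) then 0 else if (1 != a) && (1 != b) then 1 else 2)%N.
have hd : [&& (dn < p)%N, (dn != a)%N & (dn != b)%N].
  rewrite /dn; case: ifP => h1; [|case: ifP => h2]; lia.
case/and3P: hd => hdp hda hdb.
have /andP [/andP [hj hij] hjk] := all122P chk_conn (ltn_ord i) (ltn_ord k).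
set w := mxtens_index (Ordinal hj, Ordinal hdp).
have e1 : eg (mxtens_index (i, a)) w.
  rewrite egE /=.
  have -> : (a == Ordinal hdp) = false by apply/negbTE; rewrite eq_sym.
  exact: hij.
have e2 : eg w (mxtens_index (k, b)).
  rewrite egE /=.
  have -> : (Ordinal hdp == b) = false by apply/negbTE.
  exact: hjk.
exact: connect_trans (connect1 e1) (connect1 e2).
Qed.

Local Close Scope ring_scope.
Theorem corollary3p4 :
  forall p : nat, 2 < p ->
  exists e : rel 'I_(12 * p),
    [/\ simple_graph e, connected_graph e, regular e (7 * p - 3)
      & integral_graph e].
Proof.
move=> p p2; exists (@eg p); split.
- exact: simple_eg.
- exact: connected_eg.
- by apply: regular_eg; lia.
- by move=> a; rewrite adjA; exact: integral_A.
Qed.
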